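(* Let $\Gamma$ be a connected signed graph with $n$ vertices and $m$ edges, and let $\mu_1\ge\mu_2\ge\cdots\ge\mu_n\ge 0$ be the eigenvalues of its Laplacian matrix $L(\Gamma)$ (with multiplicity). Let $p$ be a positive integer. Then the spectrum of the adjacency matrix of $S_p(\Gamma)$, as a multiset, is: if $\Gamma$ is balanced (in which case $\mu_n=0$): $0$ with multiplicity $pm-n+2$, together with $\pm\sqrt{p\mu_i}$ for $i=1,\dots,n-1$; if $\Gamma$ is unbalanced: $0$ with multiplicity $pm-n$, together with $\pm\sqrt{p\mu_i}$ for $i=1,\dots,n$.
   Context: A signed graph $\Gamma=(G,\sigma)$ is a simple graph $G$ with a sign function $\sigma:E(G)\to\{1,-1\}$; its adjacency matrix $A(\Gamma)$ has $(i,j)$ entry $\sigma(v_iv_j)$ if $v_iv_j\in E(G)$ and $0$ otherwise, and its Laplacian matrix is $L(\Gamma)=D(G)-A(\Gamma)$ with $D(G)$ the diagonal degree matrix. $\Gamma$ is balanced if every cycle has an even number of negative edges, unbalanced otherwise. The spectrum of a signed graph means the spectrum of its adjacency matrix. Orientation: for $\Gamma$ with vertices $v_1,\dots,v_n$ and edges $e_1,\dots,e_m$, fix a function $\vartheta$ assigning to each pair $(v,e)$ with $v$ an end of $e$ a value $\vartheta(v,e)\in\{1,-1\}$, such that for every edge $e=vw$, $\vartheta(v,e)\vartheta(w,e)=-\sigma(e)$. The signed graph $S_p(\Gamma)$ ($p$ a positive integer): its vertex set is $V(G)\cup\{e_j^{(t)}:1\le j\le m,\ 1\le t\le p\}$;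 its edges are exactly the pairs $v\,e_j^{(t)}$ with $v$ an end of $e_j$ in $G$, with sign $\vartheta(v,e_j)$ (the edges of $G$ are not kept). It has $n+pm$ vertices and $2pm$ edges; $S_1(\Gamma)=S(\Gamma)$ is the signed subdivision graph. *)

(* Defs.v *)
From HB Require Import structures.
From mathcomp Require Import all_boot all_order all_algebra.
Set Implicit Arguments. Unset Strict Implicit. Unset Printing Implicit Defensive.
Import Order.TTheory GRing.Theory Num.Theory.
Local Open Scope ring_scope.

(* A signed graph Gamma on vertex set 'I_n with m edges e_0..e_(m-1):
   edge k has ends [u k] and [v k] and sign [sigma k] (in {1,-1}). *)

Section SignedGraph.
Variables (n m : nat) (u v : 'I_m -> 'I_n) (sigma : 'I_m -> int).

Definition simple_signed_graph : Prop :=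
  (forall k, u k != v k) /\
  (forall k l, [set u k; v k] = [set u l; v l] -> k = l) /\
  (forall k, sigma k = 1 \/ sigma k = -1).

Definition joins (k : 'I_m) (i j : 'I_n) : bool :=
  ((u k == i) && (v k == j)) || ((u k == j) && (v k == i)).

Definition adjr : rel 'I_n := fun i j => [exists k, joins k i j].

Definition connected_graph : Prop := forall i j, connect adjr i j.

Definition neg_edge (i j : 'I_n) : bool := [exists k, joins k i j && (sigma k == -1)].

Definition is_cycle (c : seq 'I_n) : bool :=
  [&& uniq c, 2 < size c & cycle adjr c]%N.

Definition num_neg_edges (c : seq 'I_n) : nat :=
  count (fun xy => neg_edge xy.1 xy.2) (zip c (rot 1 c)).

Definition balanced : Prop :=
  forall c, is_cycle c -> ~~ odd (num_neg_edges c).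

Definition adj_mx (R : nzRingType) : 'M[R]_n :=
  \matrix_(i, j) \sum_(k | joins k i j) (sigma k)%:~R.

Definition degree (i : 'I_n) : nat := #|[set k : 'I_m | (u k == i) || (v k == i)]|.

Definition lap_mx (R : nzRingType) : 'M[R]_n :=
  \matrix_(i, j) (((degree i)%:R *+ (i == j)) - adj_mx R i j).

(* orientation: thu k = theta(u k, e_k), thv k = theta(v k, e_k) *)
Definition orientation (thu thv : 'I_m -> int) : Prop :=
  (forall k, thu k = 1 \/ thu k = -1) /\ (forall k, thv k = 1 \/ thv k = -1) /\
  (forall k, thu k * thv k = - sigma k).

(* vertex set of S_p(Gamma): V(G) + {e_k^(t)} *)
Definition Sp_vertex (p : nat) : finType := ('I_n + ('I_p * 'I_m))%type.

Definition Sp_entry (R : nzRingType) (p : nat) (thu thv : 'I_m -> int)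
    (x y : Sp_vertex p) : R :=
  let f (w : 'I_n) (k : 'I_m) : R :=
      ((if w == u k then thu k else 0) + (if w == v k then thv k else 0))%:~R in
  match x, y with
  | inl w, inr (t, k) => f w k
  | inr (t, k), inl w => f w k
  | _, _ => 0
  end.

Definition Sp_adj_mx (R : nzRingType) (p : nat) (thu thv : 'I_m -> int)
  : 'M[R]_#|Sp_vertex p| :=
  \matrix_(a, b) Sp_entry R thu thv (enum_val a) (enum_val b).

End SignedGraph.

(* Main.v *)
Require Import Defs.
From HB Require Import structures.
From mathcomp Require Import all_boot all_order all_algebra.
From mathcomp Require fingroup perm.
From mathcomp Require Import zify ring lra.
Import Order.TTheory GRing.Theory Num.Theory.
Set Implicit Arguments. Unset Strict Implicit. Unset Printing Implicit Defensive.
Local Open Scope ring_scope.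

Lemma zip_trunc (S T : Type) (s : seq S) (t : seq T) x :
  size s = size t -> zip (rcons s x) t = zip s t.
Proof. by elim: s t => [|a s IH] [|b t] //= [/IH ->]. Qed.

Lemma drop_zip (S T : Type) k (s : seq S) (t : seq T) :
  zip (drop k s) (drop k t) = drop k (zip s t).
Proof. by elim: k s t => [|k IH] [|a s] [|b t] //=; case: (drop k _). Qed.

Lemma take_zip (S T : Type) k (s : seq S) (t : seq T) :
  zip (take k s) (take k t) = take k (zip s t).
Proof. by elim: k s t => [|k IH] [|a s] [|b t] //=; rewrite IH. Qed.

Lemma zip_rot (S T : Type) (s : seq S) (t : seq T) k :
  size s = size t -> zip (rot k s) (rot k t) = rot k (zip s t).
Proof.
by move=> e; rewrite /rot zip_cat ?size_drop ?e // drop_zip take_zip.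
Qed.

Lemma char_poly_reindex (R : comNzRingType) K1 K2 (h : 'I_K1 -> 'I_K2) (A : 'M[R]_K2) :
  bijective h -> char_poly (\matrix_(i, j) A (h i) (h j)) = char_poly A.
Proof.
move=> hb; have e : K1 = K2 by have := bij_eq_card hb; rewrite !card_ord.
subst K2; pose s := perm.perm (bij_inj hb).
have -> : \matrix_(i, j) A (h i) (h j) = row_perm s (col_perm s A).
  by apply/matrixP => i j; rewrite !mxE !perm.permE.
rewrite /char_poly.
have -> : char_poly_mx (row_perm s (col_perm s A)) =
          row_perm s (col_perm s (char_poly_mx A)).
  by apply/matrixP => i j; rewrite !mxE !perm.permE (inj_eq (bij_inj hb)).
rewrite row_permE col_permE !det_mulmx !det_perm perm.odd_permV mulrCA.
by rewrite -expr2 sqrr_sign mulr1.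
Qed.

Lemma det_shift (R : fieldType) K (L : 'M[R]_K) (mu : 'I_K -> R) (a : R) (q : {poly R}) :
  a != 0 -> char_poly L = \prod_i ('X - (mu i)%:P) ->
  \det (q%:M - map_mx polyC (a *: L)) = \prod_i (q - (a * mu i)%:P).
Proof.
move=> a0 cL; pose q' := a^-1 *: q.
have e1 : map_mx (comp_poly q') (char_poly_mx L) = q'%:M - map_mx polyC L.
  apply/matrixP => i j; rewrite !mxE rmorphB /= comp_polyC rmorphMn /= comp_polyX.
  done.
have e2 : q%:M - map_mx polyC (a *: L) = a%:P *: (q'%:M - map_mx polyC L).
  apply/matrixP => i j; rewrite !mxE mulrBr polyCM mulrnAr /q' [a%:P * (_ *: _)]mul_polyC.
  by rewrite scalerA mulfV // scale1r.
rewrite e2 detZ -e1 det_map_mx -/(char_poly L) cL rmorph_prod /=.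
have -> : a%:P ^+ K = \prod_(i < K) a%:P by rewrite prodr_const card_ord.
rewrite -big_split /=; apply: eq_bigr => i _.
by rewrite rmorphB /= comp_polyX comp_polyC mulrBr mul_polyC /q' scalerA mulfV // scale1r polyCM.
Qed.

Lemma block_det (R : comNzRingType) n1 n2 (B : 'M[R]_(n1, n2)) :
  'X ^+ (n1 + n2) * char_poly (block_mx 0 B B^T 0) =
  'X ^+ (2 * n2) * \det (('X ^+ 2)%:M - map_mx polyC (B *m B^T)).
Proof.
set Bp := map_mx polyC B.
have eM : char_poly_mx (block_mx 0 B B^T 0) =
          block_mx ('X%:M) (- Bp) (- Bp^T) ('X%:M).
  rewrite /char_poly_mx map_block_mx !map_mx0 (scalar_mx_block n1 n2).
  by rewrite opp_block_mx add_block_mx !oppr0 !addr0 !add0r map_trmx.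
pose P := block_mx ('X%:M : 'M_n1) Bp 0 ('X%:M : 'M_n2).
have dP : \det P = 'X ^+ (n1 + n2) by rewrite det_ublock !det_scalar exprD.
have eP : P *m char_poly_mx (block_mx 0 B B^T 0) =
   block_mx (('X ^+ 2)%:M - map_mx polyC (B *m B^T)) 0 (- ('X *: Bp^T)) (('X ^+ 2)%:M).
  rewrite eM mulmx_block !mul0mx !add0r !mul_scalar_mx mulmxN mul_mx_scalar.
  by rewrite !scalerN addNr map_mxM map_trmx -/Bp !scale_scalar_mx -expr2.
rewrite /char_poly -dP -det_mulmx eP det_lblock det_scalar -exprM mulrC.
by rewrite mulnC.
Qed.

Section Graph.
Variables (n m : nat) (u v : 'I_m -> 'I_n) (sigma : 'I_m -> int).

Local Notation adj := (adjr u v).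
Local Notation neg := (neg_edge u v sigma).

Lemma joinsC k i j : joins u v k i j = joins u v k j i.
Proof. by rewrite /joins orbC. Qed.

Lemma adjC i j : adj i j = adj j i.
Proof. by apply/existsP/existsP => -[k H]; exists k; rewrite joinsC. Qed.

Lemma negC i j : neg i j = neg j i.
Proof. by apply/existsP/existsP => -[k H]; exists k; rewrite joinsC. Qed.

Definition pp (x : 'I_n) (s : seq 'I_n) : nat :=
  count (fun ab => neg ab.1 ab.2) (zip (x :: s) s).

Lemma nne_pp x s : num_neg_edges u v sigma (x :: s) = pp x (rcons s x).
Proof.
rewrite /num_neg_edges /pp rot1_cons -rcons_cons zip_trunc //.
by rewrite size_rcons.
Qed.

Lemma num_rot k c : num_neg_edges u v sigma (rot k c) = num_neg_edges u v sigma c.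
Proof.
rewrite /num_neg_edges rot_rot zip_rot ?size_rot //.
set X := zip c _; have /seq.permP H : perm_eq (rot k X) X by rewrite perm_rot.
exact: H.
Qed.

Lemma pp_cat x s t : pp x (s ++ t) = (pp x s + pp (last x s) t)%N.
Proof.
elim: s x => [|a s IH] x //=.
by rewrite /pp /= -/(pp a (s ++ t)) IH /pp /= addnA.
Qed.

Lemma nouniq_split (T : eqType) (c : seq T) : ~~ uniq c ->
  exists a y b d, c = a ++ y :: b ++ y :: d.
Proof.
elim: c => [|z c IH] //=; rewrite negb_and negbK; case/orP => [zc|/IH].
  by case/splitPr: zc => b d; exists [::], z, b, d.
by case=> a [y [b [d ->]]]; exists (z :: a), y, b, d.
Qed.

Hypothesis simple : simple_signed_graph u v sigma.

Lemma adj_irr i : adj i i = false.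
Proof.
case: simple => uv _; apply/negbTE/existsP => -[k].
by rewrite /joins orbb => /andP[/eqP a /eqP b]; move: (uv k); rewrite a b eqxx.
Qed.

Lemma neg_joins k i j : joins u v k i j -> neg i j = (sigma k == -1).
Proof.
case: simple => _ [uniqe _] jk; apply/existsP/idP => [[l /andP[jl /eqP <-]]|s1].
  suff -> : k = l by [].
  apply: uniqe; move: jk jl; rewrite /joins.
  by case/orP=> /andP[/eqP -> /eqP ->] /orP[] /andP[/eqP -> /eqP ->] //; rewrite setUC.
by exists k; rewrite jk.
Qed.

Lemma joins_uv k : joins u v k (u k) (v k).
Proof. by rewrite /joins !eqxx. Qed.

Section Bal.
Hypothesis bal : balanced u v sigma.

Lemma cyc_even c : cycle adj c -> ~~ odd (num_neg_edges u v sigma c).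
Proof.
elim: {c}(size c).+1 {-2}c (ltnSn (size c)) => // N IH c.
case: (boolP (uniq c)) => [uc|nu] sc cc.
  case: (ltnP 2 (size c)) => [c2|].
    by apply: bal; rewrite /is_cycle uc c2 cc.
  case: c cc {sc uc} => [|x [|y [|z c]]] //=.
    by rewrite adj_irr.
  by rewrite /num_neg_edges /= negC addn0 addnn odd_double.
case: (@nouniq_split _ c nu) => a [y [b [d ec]]].
have := num_rot (size a) c; have := rot_cycle (size a) adj c.
rewrite {1 3}ec rot_size_cat cat_cons -catA cc => cc' <-.
have E : rcons (b ++ (y :: d) ++ a) y = rcons b y ++ rcons (d ++ a) y.
  by rewrite cat_rcons rcons_cat.
move: cc'; rewrite nne_pp /cycle E pp_cat cat_path last_rcons -!nne_pp.
rewrite -/(cycle adj (y :: b)) -/(cycle adj (y :: (d ++ a))) => /andP[c1 c2].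
rewrite oddD (negbTE (IH _ _ c1)) ?(negbTE (IH _ _ c2)) //;
  move: sc; rewrite ec !size_cat /= ?size_cat /=; lia.
Qed.

Lemma closed_even x s : path adj x s -> last x s = x -> ~~ odd (pp x s).
Proof.
case/lastP: s => [|s z] //= pa; rewrite last_rcons => ez; subst z.
by rewrite -nne_pp; apply: cyc_even.
Qed.

Definition E : rel ('I_n * bool) :=
  fun a b => adj a.1 b.1 && (b.2 == a.2 (+) neg a.1 b.1).

Lemma E_path a P : path E a P ->
  path adj a.1 (map fst P) && ((last a P).2 == a.2 (+) odd (pp a.1 (map fst P))).
Proof.
elim: P a => [|b P IH] a /=; first by rewrite addbF eqxx.
case/andP=> /andP[ab /eqP b2] /IH /andP[pP /eqP e]; rewrite ab pP /= e b2.
by rewrite /pp /= oddD oddb addbA.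
Qed.

Lemma no_flip x b : ~~ connect E (x, b) (x, ~~ b).
Proof.
apply/negP=> /connectP[P pP lP]; have /andP[pa /eqP e] := E_path pP.
rewrite -lP /= in e; have cl : last x (map fst P) = x.
  by rewrite -[x in last x _]/((x, b).1) last_map -lP.
have := closed_even pa cl; move: e => /= {pP lP pa}.
by case: b; case: (odd _).
Qed.

Lemma E_sym : symmetric E.
Proof.
move=> [a1 a2] [b1 b2]; rewrite /E /= adjC negC.
by case: (adj _ _) => //=; case: a2; case: b2; case: (neg _ _).
Qed.

Lemma lift_conn x y b : connect adj x y -> exists b', connect E (x, b) (y, b').
Proof.
case/connectP=> s; elim: s x b => [|z s IH] x b /=.
  by move=> _ ->; exists b; exact: connect0.
case/andP=> xz pz ly; have [b' H] := IH z (b (+) neg x z) pz ly.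
exists b'; apply: connect_trans H; apply: connect1.
by rewrite /E /= xz eqxx.
Qed.

Variable R : rcfType.
Definition wsw (r j : 'I_n) : R := if connect E (r, false) (j, false) then 1 else -1.

Lemma wsw_val r j (bj : bool) : connect E (r, false) (j, bj) -> wsw r j = (-1) ^+ bj.
Proof.
rewrite /wsw; case: bj => H; last by rewrite H.
case: ifP => // H2; have := no_flip j false; rewrite /= => /negP; case.
apply: connect_trans H; rewrite (sym_connect_sym E_sym); exact: H2.
Qed.

Hypothesis conn : connected_graph u v.

Lemma wsw_edge r k : wsw r (v k) = (sigma k)%:~R * wsw r (u k).
Proof.
have [ba Ha] := lift_conn false (conn r (u k)).
have ab : adj (u k) (v k) by apply/existsP; exists k; exact: joins_uv.
have Hb : connect E (r, false) (v k, ba (+) neg (u k) (v k)).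
  by apply: connect_trans Ha _; apply: connect1; rewrite /E /= ab eqxx.
rewrite (wsw_val Ha) (wsw_val Hb) signr_addb mulrC (neg_joins (joins_uv k)).
by case: simple => _ [_ /(_ k)] [] ->.
Qed.

End Bal.

Variable R : rcfType.
Hypothesis conn : connected_graph u v.

Section KerV.
Variables (thu thv : 'I_m -> int) (x : 'I_n -> R).
Hypothesis Ho : orientation sigma thu thv.
Hypothesis hx : forall k, (thu k)%:~R * x (u k) + (thv k)%:~R * x (v k) = 0.

Lemma xuv k : x (u k) = (sigma k)%:~R * x (v k).
Proof.
case: Ho => h1 [h2 h3]; have es : sigma k = - (thu k * thv k) by rewrite h3 opprK.
move: (hx k); rewrite es; case: (h1 k) => ->; case: (h2 k) => -> /=;
  rewrite ?(mulN1r, mulr1, opprK, intrN, mulNr, mul1r); lra.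
Qed.

Lemma sigma_abs k : `|(sigma k)%:~R : R| = 1.
Proof. by case: simple => _ [_ /(_ k)] [] ->; rewrite ?intrN ?normrN normr1. Qed.

Lemma abs_adj a b : adj a b -> `|x a| = `|x b|.
Proof.
case/existsP=> k; rewrite /joins => /orP[] /andP[/eqP <- /eqP <-];
  by rewrite xuv normrM sigma_abs mul1r.
Qed.

Lemma abs_const i j : `|x i| = `|x j|.
Proof.
have /connectP[s ps ->] := conn i j.
elim: s i ps => //= z s IH i /andP[iz ps].
by rewrite (abs_adj iz) IH.
Qed.

Lemma ker_zero r : x r = 0 -> forall j, x j = 0.
Proof. by move=> h j; apply/normr0_eq0; rewrite (abs_const j r) h normr0. Qed.

Lemma ker_bal (r : 'I_n) : x r != 0 -> balanced u v sigma.
Proof.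
move=> xr; pose sg a := x a < 0.
have nz j : x j != 0 by rewrite -normr_eq0 (abs_const j r) normr_eq0.
have nsg a b : adj a b -> neg a b = (sg a != sg b).
  case/existsP => k jk; rewrite (neg_joins jk); move: jk; rewrite /joins /sg.
  have := nz (v k); case: (ltgtP (x (v k)) 0) => // xv _.
    by case/orP=> /andP[/eqP <- /eqP <-]; rewrite xuv;
      case: simple => _ [_ /(_ k)] [] -> /=; rewrite ?intrN ?mulN1r ?mul1r ?oppr_lt0 xv ?(lt_asym) //=;
      rewrite ?(lt_gtF xv) //.
  by case/orP=> /andP[/eqP <- /eqP <-]; rewrite xuv;
    case: simple => _ [_ /(_ k)] [] -> /=; rewrite ?intrN ?mulN1r ?mul1r ?oppr_lt0 ?xv ?(lt_gtF xv) //.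
have par y s : path adj y s -> odd (pp y s) = sg y (+) sg (last y s).
  elim: s y => [|z s IH] y /=; first by rewrite addbb.
  case/andP=> yz ps; rewrite /pp /= -/(pp z s) oddD oddb (IH _ ps) (nsg _ _ yz).
  by case: (sg y); case: (sg z); case: (sg (last z s)).
move=> [|y s] //; rewrite /is_cycle => /and3P[_ _ cyc].
by rewrite nne_pp (par _ _ cyc) last_rcons addbb.
Qed.

End KerV.

Section Inc.
Variables (thu thv : 'I_m -> int).
Hypothesis Ho : orientation sigma thu thv.

Definition finc (i : 'I_n) (k : 'I_m) : int :=
  (if i == u k then thu k else 0) + (if i == v k then thv k else 0).

Definition Ninc : 'M[R]_(n, m) := \matrix_(i, k) (finc i k)%:~R.

Lemma int_aux (a b s : int) (iu iv ju jv ij : bool) :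
  (a = 1 \/ a = -1) -> (b = 1 \/ b = -1) -> a * b = - s ->
  ~~ (iu && iv) -> ~~ (ju && jv) -> (ij -> (iu == ju) && (iv == jv)) ->
  (~~ ij -> ~~ (iu && ju) && ~~ (iv && jv)) ->
  ((if iu then a else 0) + (if iv then b else 0)) *
  ((if ju then a else 0) + (if jv then b else 0)) =
  (if ij then ((iu || iv) : int) else 0) - (if (iu && jv) || (ju && iv) then s else 0).
Proof.
move=> [->|->] [->|->] e; rewrite -[s]opprK -e;
   case: iu; case: iv; case: ju; case: jv; case: ij => //= _ _ H1 H2;
   first [by move: (H1 isT) | by move: (H2 isT) | done].
Qed.

Lemma finc2 i j k : finc i k * finc j k =
  (if i == j then (((u k == i) || (v k == i)) : int) else 0) -
  (if joins u v k i j then sigma k else 0).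
Proof.
case: Ho => h1 [h2 h3]; case: simple => uv _.
rewrite /finc /joins ![_ == u k]eq_sym ![_ == v k]eq_sym.
apply: int_aux => //.
- by apply/negP=> /andP[/eqP a /eqP b]; move: (uv k); rewrite a b eqxx.
- by apply/negP=> /andP[/eqP a /eqP b]; move: (uv k); rewrite a b eqxx.
- by move/eqP->; rewrite !eqxx.
- move=> ij; apply/andP; split; apply/negP=> /andP[/eqP a /eqP b];
    by move: ij; rewrite -a -b eqxx.
Qed.

Lemma lapE : lap_mx u v sigma R = Ninc *m Ninc^T.
Proof.
apply/matrixP=> i j; rewrite !mxE.
under [RHS]eq_bigr do rewrite !mxE -intrM finc2 intrB.
rewrite sumrB; congr (_ - _); last first.
  by rewrite big_mkcond /=; apply: eq_bigr => k _; case: ifP.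
case: (eqVneq i j) => [e|ij] /=; last by rewrite big1.
subst j.
rewrite /degree -sum1_card big_mkcond /= natr_sum.
by apply: eq_bigr => k _; rewrite inE; case: (_ || _).
Qed.

Lemma sum_delta (F : 'I_n -> R) j (c : int) :
  \sum_i F i * (if i == j then c else 0)%:~R = F j * c%:~R.
Proof.
rewrite (bigD1 j) //= eqxx big1 ?addr0 // => i /negbTE ->; by rewrite mulr0.
Qed.

Lemma mulN (y : 'rV[R]_n) k :
  (y *m Ninc) 0 k = (thu k)%:~R * y 0 (u k) + (thv k)%:~R * y 0 (v k).
Proof.
rewrite mxE; under eq_bigr do rewrite mxE intrD mulrDr.
by rewrite big_split /= !sum_delta mulrC [_ * (thv k)%:~R]mulrC.
Qed.

Lemma kerE (y : 'rV[R]_n) : y *m Ninc = 0 ->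
  forall k, (thu k)%:~R * y 0 (u k) + (thv k)%:~R * y 0 (v k) = 0.
Proof. by move=> h k; rewrite -mulN h mxE. Qed.

Lemma rank_unbal : ~ balanced u v sigma -> (n <= m)%N.
Proof.
move=> nb; have K0 : kermx Ninc = 0.
  apply/row_matrixP => i; rewrite row0; set y := row i (kermx Ninc).
  have yN : y *m Ninc = 0 by rewrite -row_mul mulmx_ker row0.
  apply/rowP => j; rewrite [RHS]mxE.
  case: (eqVneq (y 0 j) 0) => [//|nz].
  case: nb.
  exact: (@ker_bal thu thv (fun j => y 0 j) Ho (kerE yN) j nz).
have := mxrank_ker Ninc; rewrite K0 mxrank0 => /esym/eqP; rewrite subn_eq0.
by move/leq_trans; apply; exact: rank_leq_col.
Qed.

Section BalR.
Hypothesis bal : balanced u v sigma.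
Variable r : 'I_n.
Definition wv : 'rV[R]_n := \row_j wsw R r j.

Lemma wv_ker : wv *m Ninc = 0.
Proof.
apply/rowP => k; rewrite mulN !mxE (wsw_edge bal _ conn).
case: Ho => h1 [h2 h3]; have es : sigma k = - (thu k * thv k) by rewrite h3 opprK.
rewrite es; case: (h1 k) => ->; case: (h2 k) => -> /=;
  rewrite ?(mulN1r, mulr1, opprK, intrN, mulNr, mul1r); lra.
Qed.

Lemma wv_nz : wv 0 r != 0.
Proof. by rewrite mxE /wsw; case: ifP => _; rewrite ?oppr_eq0 oner_eq0. Qed.

Lemma rank_bal : (n <= m.+1)%N.
Proof.
have Ks : (kermx Ninc <= wv)%MS.
  apply/row_subP => i; set y := row i (kermx Ninc).
  have yN : y *m Ninc = 0 by rewrite -row_mul mulmx_ker row0.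
  pose c := y 0 r / wv 0 r; set z := y - c *: wv.
  have zN : z *m Ninc = 0 by rewrite mulmxBl -scalemxAl wv_ker scaler0 yN subr0.
  have zr : z 0 r = 0.
    rewrite /z /c !mxE divfK ?subrr //; have := wv_nz; by rewrite mxE.
  have z0 : z = 0.
    apply/rowP => j; rewrite [RHS]mxE.
    exact: (@ker_zero thu thv (fun j => z 0 j) Ho (kerE zN) r zr j).
  have -> : y = c *: wv by apply/eqP; rewrite -subr_eq0 -/z z0.
  by rewrite scalemx_sub.
have := mxrankS Ks; rewrite mxrank_ker => h.
have h2 := rank_leq_row wv; have h3 := rank_leq_col Ninc.
lia.
Qed.

Lemma lap_sing : \det (lap_mx u v sigma R) = 0.
Proof.
apply/eqP; apply: contraT => nz.
have U : lap_mx u v sigma R \in unitmx by rewrite unitmxE unitfE.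
have : wv *m lap_mx u v sigma R = 0 by rewrite lapE mulmxA wv_ker mul0mx.
move/(congr1 (mulmx^~ (invmx (lap_mx u v sigma R)))).
rewrite mulmxK // mul0mx => w0; have := wv_nz; by rewrite w0 mxE eqxx.
Qed.

End BalR.
End Inc.

Section Sp.
Variables (thu thv : 'I_m -> int) (p : nat).
Hypothesis Ho : orientation sigma thu thv.

Lemma cprod : (p * m = #|{: 'I_p * 'I_m}|)%N.
Proof. by rewrite card_prod !card_ord. Qed.

Definition dec (k : 'I_(p * m)) : 'I_p * 'I_m := enum_val (cast_ord cprod k).
Definition dec' (x : 'I_p * 'I_m) : 'I_(p * m) := cast_ord (esym cprod) (enum_rank x).

Lemma decK : cancel dec dec'.
Proof. by move=> k; rewrite /dec /dec' enum_valK cast_ordK. Qed.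
Lemma dec'K : cancel dec' dec.
Proof. by move=> x; rewrite /dec /dec' cast_ordKV enum_rankK. Qed.

Definition phi (i : 'I_(n + p * m)) : Sp_vertex n m p :=
  match split i with inl j => inl j | inr k => inr (dec k) end.
Definition psi (x : Sp_vertex n m p) : 'I_(n + p * m) :=
  unsplit (match x with inl j => inl j | inr y => inr (dec' y) end).

Lemma split_l (i : 'I_n) : split (lshift (p * m) i) = inl i.
Proof. exact: (unsplitK (inl _ i)). Qed.
Lemma split_r (k : 'I_(p * m)) : split (rshift n k) = inr k.
Proof. exact: (unsplitK (inr _ k)). Qed.

Lemma phi_bij : bijective phi.
Proof.
exists psi => [i|x].
  rewrite /phi /psi -{2}(splitK i); case: (split i) => // k.
  by rewrite decK.
by case: x => [j|y]; rewrite /phi /psi unsplitK // dec'K.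
Qed.

Definition hh (i : 'I_(n + p * m)) := enum_rank (phi i).

Lemma hh_bij : bijective hh.
Proof. exact: (bij_comp (enum_rank_bij _) phi_bij). Qed.

Definition Bm : 'M[R]_(n, p * m) := \matrix_(i, k) (finc thu thv i (dec k).2)%:~R.

Lemma A3E : \matrix_(i, j) Sp_adj_mx u v R p thu thv (hh i) (hh j) =
  block_mx 0 Bm Bm^T 0.
Proof.
rewrite -[LHS]submxK; congr block_mx; apply/matrixP => i j; rewrite !mxE /hh !enum_rankK /phi.
- by rewrite !split_l.
- by rewrite split_l split_r; case: (dec j).
- by rewrite split_l split_r; case: (dec i).
- by rewrite !split_r; case: (dec i); case: (dec j).
Qed.

Lemma BmE : Bm *m Bm^T = p%:R *: (Ninc thu thv *m (Ninc thu thv)^T).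
Proof.
apply/matrixP => i j; rewrite !mxE.
have db : bijective dec by exists dec'; [exact: decK | exact: dec'K].
transitivity (\sum_(x : 'I_p * 'I_m) (finc thu thv i x.2)%:~R * (finc thu thv j x.2)%:~R :> R).
  rewrite [RHS](reindex dec) /=; last exact: onW_bij.
  by apply: eq_bigr => k _; rewrite !mxE.
rewrite -(pair_bigA _ (fun (t : 'I_p) (k : 'I_m) =>
   (finc thu thv i k)%:~R * (finc thu thv j k)%:~R)) /= sumr_const card_ord -[in LHS]mulr_natl.
congr (_ * _).
by apply: eq_bigr => k _; rewrite !mxE.
Qed.

End Sp.
End Graph.

Unset Implicit Arguments.

Theorem theorem4p2 (R : rcfType) (n m : nat) (u v : 'I_m -> 'I_n)
    (sigma : 'I_m -> int) (p : nat) (thu thv : 'I_m -> int) (mu : 'I_n -> R) :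
  simple_signed_graph u v sigma ->
  connected_graph u v ->
  (0 < n)%N ->
  (0 < p)%N ->
  orientation sigma thu thv ->
  (forall i j : 'I_n, (i <= j)%N -> mu j <= mu i) ->
  (forall i, 0 <= mu i) ->
  char_poly (lap_mx u v sigma R) = \prod_(i < n) ('X - (mu i)%:P) ->
  (balanced u v sigma ->
     (forall i : 'I_n, val i = n.-1 -> mu i = 0) /\
     char_poly (Sp_adj_mx u v R p thu thv) =
       'X ^+ (p * m + 2 - n) *
       \prod_(i < n | (i < n.-1)%N)
          (('X - (Num.sqrt (p%:R * mu i))%:P) * ('X + (Num.sqrt (p%:R * mu i))%:P)))
  /\
  (~ balanced u v sigma ->
     char_poly (Sp_adj_mx u v R p thu thv) =
       'X ^+ (p * m - n) *
       \prod_(i < n)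
          (('X - (Num.sqrt (p%:R * mu i))%:P) * ('X + (Num.sqrt (p%:R * mu i))%:P))).
Proof.
move=> simple conn n0 p0 Ho mono mu0 cL.
pose F i := ('X - (Num.sqrt (p%:R * mu i))%:P) * ('X + (Num.sqrt (p%:R * mu i))%:P).
have sq i : 'X ^+ 2 - (p%:R * mu i)%:P = F i.
  by rewrite /F -subr_sqr -[_%:P ^+ 2]rmorphXn /= sqr_sqrtr // mulr_ge0 ?ler0n.
have KEY : 'X ^+ (n + p * m) * char_poly (Sp_adj_mx u v R p thu thv) =
           'X ^+ (2 * (p * m)) * \prod_(i < n) F i.
  rewrite -(char_poly_reindex _ (hh_bij n m p)) (A3E u v R thu thv p) block_det.
  rewrite BmE -(lapE simple R Ho) (det_shift _ _ cL) ?pnatr_eq0 -?lt0n //.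
  by under eq_bigr do rewrite sq.
have mpm : (m <= p * m)%N by rewrite leq_pmull.
have X0 : forall k, ('X ^+ k : {poly R}) != 0 by move=> k; rewrite expf_neq0 // polyX_eq0.
split.
  move=> bal.
  have mu_last : forall i : 'I_n, val i = n.-1 -> mu i = 0.
    have dL := lap_sing simple R conn Ho bal (Ordinal n0).
    have : (char_poly (lap_mx u v sigma R)).[0] = 0.
      by rewrite horner_coef0 char_poly_det dL mulr0.
    rewrite cL horner_prod => /eqP /prodf_eq0 [k _].
    rewrite hornerXsubC sub0r oppr_eq0 => /eqP mk.
    move=> i ei; apply/le_anti; rewrite mu0 andbT -mk; apply: mono.
    by rewrite ei; have := ltn_ord k; lia.
  split => //.
  have hm := rank_bal simple R conn Ho bal (Ordinal n0).
  apply: (mulfI (X0 (n + p * m)%N)); rewrite KEY.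
  have ln : (n.-1 < n)%N by lia.
  rewrite (bigD1 (Ordinal ln)) //= /F mu_last // mulr0 sqrtr0 subr0 addr0 -/F.
  rewrite (eq_bigl (fun i : 'I_n => (i < n.-1)%N)); last first.
    move=> i /=; rewrite -val_eqE /=; have := ltn_ord i; case: (ltngtP i n.-1); lia.
  rewrite mulrA -expr2 -exprD mulrA -exprD; congr (_ ^+ _ * _); lia.
move=> nb; have hm := rank_unbal simple R conn Ho nb.
apply: (mulfI (X0 (n + p * m)%N)); rewrite KEY.
by rewrite mulrA -exprD; congr (_ ^+ _ * _); lia.
Qed.
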